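(* Let $p>2$ be prime. For $t\in\mathbb{Z}/p\mathbb{Z}$ put $a_t(p)=-\sum_{x\bmod p}\left(\frac{x^3-t^2x+t^2}{p}\right)$. Then $\sum_{t\bmod p} a_t(p) = -2p$.
   Context: $\left(\frac{\cdot}{p}\right)$ denotes the Legendre symbol (equal to $0$ at multiples of $p$). *)

(* Defs.v *)
From mathcomp Require Import all_boot all_order all_algebra.
Set Implicit Arguments. Unset Strict Implicit. Unset Printing Implicit Defensive.
Import Order.TTheory GRing.Theory Num.Theory.
Local Open Scope ring_scope.

Definition legendre (a : int) (p : nat) : int :=
  if (p%:Z %| a)%Z then 0
  else if [exists x : 'I_p, ((x%:Z) ^+ 2 == a %[mod p%:Z])%Z] then 1 else -1.

Definition a_t (p : nat) (t : int) : int :=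
  - \sum_(x < p) legendre ((x%:Z) ^+ 3 - t ^+ 2 * x%:Z + t ^+ 2) p.

(* Main.v *)
Require Import Defs.
From mathcomp Require Import all_boot all_order all_algebra.
From mathcomp Require Import ring.
Set Implicit Arguments. Unset Strict Implicit. Unset Printing Implicit Defensive.
Import Order.TTheory GRing.Theory Num.Theory.
Local Open Scope ring_scope.


Section Gen.
Variable F : finFieldType.
Hypothesis h2 : (2%:R : F) != 0.

Definition sq (y : F) := [exists x : F, x ^+ 2 == y].
Definition chi (y : F) : int := if y == 0 then 0 else if sq y then 1 else -1.

Lemma chi0 : chi 0 = 0. Proof. by rewrite /chi eqxx. Qed.
Lemma chi1 : chi 1 = 1.
Proof. rewrite /chi oner_eq0; case: ifP => //; case/existsP; exists 1; by rewrite expr1n. Qed.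

Lemma chi_sqr s : s != 0 -> chi (s ^+ 2) = 1.
Proof.
move=> ns; rewrite /chi expf_eq0 (negbTE ns) andbF.
by case: ifP => // /existsP []; exists s.
Qed.

Lemma chi_mulsqr x y : x != 0 -> chi (x ^+ 2 * y) = chi y.
Proof.
move=> nx; rewrite /chi mulf_eq0 expf_eq0 (negbTE nx) andbF /=.
case: (y == 0) => //.
have -> : sq (x ^+ 2 * y) = sq y.
  apply/existsP/existsP => [[z /eqP hz]|[w /eqP hw]].
    exists (z / x); rewrite expr_div_n hz mulrC mulKf //; exact: expf_neq0.
  by exists (x * w); rewrite exprMn hw.
done.
Qed.

Lemma sumP1 (P : pred F) : \sum_(y | P y) (1 : int) = #|P|%:Z.
Proof. by rewrite (eq_bigl (fun y => y \in P)) // sumr_const natz. Qed.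

Lemma neg_neq (s : F) : s != 0 -> s != - s.
Proof.
move=> ns; apply/negP => /eqP h.
have : s *+ 2 = 0 by rewrite mulr2n {1}h addNr.
by move/eqP; rewrite -mulr_natl mulf_eq0 (negbTE h2) (negbTE ns).
Qed.

Definition nzsq := [pred y : F | (y != 0) && sq y].
Lemma card_sq : (2 * #|nzsq|)%N = #|F|.-1.
Proof.
rewrite -(cardC1 (0:F)) -[RHS]sum1_card.
rewrite (partition_big (fun x : F => x ^+ 2) nzsq) /=; last first.
  move=> x; rewrite !inE => nx; rewrite /= expf_eq0 (negbTE nx) andbF /=; apply/existsP; by exists x.
rewrite -sum1_card big_distrr /=; apply: eq_bigr => y /andP[ny /existsP[s /eqP hs]].
have nsz : s != 0 by apply: contraNneq ny => e; rewrite -hs e expr0n.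
rewrite muln1; transitivity #|pred2 s (-s)|; first by rewrite card2 (neg_neq nsz).
rewrite -sum1_card.
apply: eq_bigl => x; rewrite !inE -hs eqf_sqr.
case: eqP => [->|]; first by rewrite nsz.
case: eqP => [->|] /=; last by rewrite andbF.
by rewrite oppr_eq0 nsz.
Qed.

Lemma chi_sum : \sum_(y : F) chi y = 0.
Proof.
rewrite (bigD1 0) //= chi0 add0r.
rewrite (bigID sq) /=.
rewrite (eq_bigr (fun _ => 1)); last by move=> y /andP[ny sy]; rewrite /chi (negbTE ny) sy.
rewrite [X in _ + X](eq_bigr (fun _ => -1)); last by move=> y /andP[ny sy]; rewrite /chi (negbTE ny) (negbTE sy).
rewrite sumrN sumP1 sumP1.
have := card_sq; rewrite -(cardC1 (0:F)).
have := cardID sq (predC1 (0 : F)).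
have -> : #|[predI predC1 0 & sq]| = #|nzsq| by apply: eq_card => y; rewrite !inE.
have -> : #|(fun y : F => (y != 0) && ~~ sq y)| = #|[predD predC1 0 & sq]| by apply: eq_card => y; rewrite !inE andbC.
move=> h1 h3; have -> : #|[predD predC1 (0:F) & sq]| = #|nzsq|.
  by apply/eqP; rewrite -(eqn_add2l #|nzsq|) h1 -h3 mul2n addnn.
by rewrite subrr.
Qed.

Lemma chi_affine a b : a != 0 -> \sum_(x : F) chi (x * a + b) = 0.
Proof.
move=> na; rewrite -[RHS]chi_sum.
have inj : injective (fun x : F => x * a + b) by move=> x y /addIr /(mulIf na).
by rewrite [RHS](reindex_inj inj).
Qed.

Lemma chi_sq_sum : \sum_(t : F) chi (t ^+ 2) = (#|F|.-1)%:Z.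
Proof.
rewrite (bigD1 0) //= expr0n /= chi0 add0r -(cardC1 (0:F)) -sumP1.
apply: eq_big => t; first by rewrite !inE.
by move=> nt; rewrite chi_sqr.
Qed.

Lemma sum_sq1 (c : int) : \sum_(s : F) (if s ^+ 2 == 1 then c else 0) = 2 * c.
Proof.
rewrite -big_mkcond /= (eq_bigl (fun s => s \in pred2 1 (-1))); last first.
  by move=> s; rewrite !inE sqrf_eq1.
by rewrite sumr_const card2 (neg_neq (oner_neq0 F)) mulr2n mulr_natl mulr2n.
Qed.


Lemma inner_sum (s : F) : \sum_(x | (x != 0) && (x != 1)) chi (x * (1 - s ^+ 2) + s ^+ 2)
  = (if s ^+ 2 == 1 then #|F|%:Z else 0) - chi (s ^+ 2) - 1.
Proof.
have full : \sum_(x : F) chi (x * (1 - s ^+ 2) + s ^+ 2) = (if s ^+ 2 == 1 then #|F|%:Z else 0).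
  case: eqP => [->|/eqP ns].
    rewrite subrr; under eq_bigr => x _ do rewrite mulr0 add0r chi1.
    by rewrite sumr_const natz.
  by apply: chi_affine; rewrite subr_eq0 eq_sym.
rewrite -full [in RHS](bigD1 (0:F)) //= [in RHS](bigD1 (1:F)) //= ?oner_neq0 //.
rewrite mul0r add0r mul1r subrK chi1.
rewrite (eq_bigl (fun i => (i != 0) && (i != 1))) //.
ring.
Qed.

Lemma gen_main : \sum_(x : F) \sum_(t : F) chi (x ^+ 3 - t ^+ 2 * x + t ^+ 2) = 2 * #|F|%:Z.
Proof.
set G := fun x : F => \sum_(t : F) chi (x ^+ 3 - t ^+ 2 * x + t ^+ 2).
rewrite -/(\sum_x G x) (bigD1 (0:F)) //= (bigD1 (1:F)) ?oner_neq0 //= /G.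
have -> : \sum_t chi (0 ^+ 3 - t ^+ 2 * 0 + t ^+ 2) = (#|F|.-1)%:Z.
  rewrite -chi_sq_sum; apply: eq_bigr => t _; congr chi; ring.
have -> : \sum_t chi (1 ^+ 3 - t ^+ 2 * 1 + t ^+ 2) = #|F|%:Z.
  rewrite -natz -sumr_const; apply: eq_bigr => t _.
  have -> : (1 : F) ^+ 3 - t ^+ 2 * 1 + t ^+ 2 = 1 by ring.
  exact: chi1.
rewrite (eq_bigr (fun x => \sum_(s : F) chi (x * (1 - s ^+ 2) + s ^+ 2))); last first.
  move=> x /andP[nx _].
  rewrite (reindex_inj (mulfI nx)) /=; apply: eq_bigr => s _.
  have -> : x ^+ 3 - (x * s) ^+ 2 * x + (x * s) ^+ 2 = x ^+ 2 * (x * (1 - s ^+ 2) + s ^+ 2) by ring.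
  by rewrite chi_mulsqr.
rewrite exchange_big /=.
under eq_bigr => s _ do rewrite inner_sum.
rewrite !sumrB sum_sq1 chi_sq_sum sumr_const natz.
ring.
Qed.

End Gen.

Section Spec.
Variable p : nat.
Hypothesis hp : prime p.
Hypothesis hp2 : (2 < p)%N.
Local Notation Fp := ('F_p : finFieldType).

Lemma two_nz : (2%:R : Fp) != 0.
Proof.
apply/eqP => h; have := congr1 (fun z : 'F_p => nat_of_ord z) h; rewrite /= Fp_cast // (modn_small (ltnW hp2)) modn_small //.
Qed.

Lemma valFp_lt (y : Fp) : (val y < p)%N.
Proof. by apply: leq_trans (ltn_ord y) _; rewrite Fp_cast. Qed.

Lemma natr_val (y : Fp) : (val y)%:R = y.
Proof. by apply: val_inj; rewrite /= val_Fp_nat // modn_small // valFp_lt. Qed.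

Lemma sum_conv (f : Fp -> int) : \sum_(x < p) f (x%:R) = \sum_(y : Fp) f y.
Proof.
pose g (y : Fp) : 'I_p := Ordinal (valFp_lt y).
rewrite (reindex (fun x : 'I_p => (x : nat)%:R : Fp)) //.
exists g => [x _|y _]; last by rewrite natr_val.
by apply: val_inj; rewrite /= val_Fp_nat // modn_small.
Qed.

Lemma legendreE (a : int) : legendre a p = chi (a%:~R : Fp).
Proof.
rewrite /legendre /chi (dvdz_pcharf (pchar_Fp hp)).
case: (_ == 0) => //.
have -> : [exists x : 'I_p, ((x%:Z) ^+ 2 == a %[mod p%:Z])%Z] = sq (a%:~R : Fp).
  have E (x : nat) : ((x%:Z) ^+ 2 == a %[mod p%:Z])%Z = ((x%:R : Fp) ^+ 2 == a%:~R).
    by rewrite eqz_mod_dvd (dvdz_pcharf (pchar_Fp hp)) rmorphB rmorphXn /= subr_eq0.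
  apply/existsP/existsP => [[x hx]|[y hy]].
    by exists (x%:R); rewrite -E.
  by exists (Ordinal (valFp_lt y)); rewrite E /= natr_val.
done.
Qed.

End Spec.

Theorem mainTheorem6 (p : nat) (hp : prime p) (hp2 : (2 < p)%N) :
  \sum_(t < p) a_t p (t%:Z) = - (2 * p%:Z).
Proof.
have E (t x : nat) : legendre ((x%:Z) ^+ 3 - (t%:Z) ^+ 2 * x%:Z + (t%:Z) ^+ 2) p
    = chi ((x%:R : 'F_p) ^+ 3 - (t%:R) ^+ 2 * x%:R + (t%:R) ^+ 2).
  by rewrite legendreE // rmorphD rmorphB !rmorphXn rmorphM rmorphXn.
rewrite /a_t sumrN; congr (- _).
under eq_bigr => t _ do under eq_bigr => x _ do rewrite E.
rewrite (sum_conv hp (fun T => \sum_(x < p) chi ((x%:R : 'F_p) ^+ 3 - T ^+ 2 * x%:R + T ^+ 2))).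
under eq_bigr => T _ do rewrite (sum_conv hp (fun X => chi (X ^+ 3 - T ^+ 2 * X + T ^+ 2))).
by rewrite exchange_big /= (gen_main (two_nz hp hp2)) card_Fp.
Qed.
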